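(* Let $p \geq m \geq 1$ and $q \geq s \geq 1$ be integers. Then there is a graph homomorphism from ${\sf M}_p(C_{2q+1})$ to ${\sf M}_m(C_{2s+1})$.
   Context: $C_n$ is the cycle on $n$ vertices. A homomorphism from $G$ to $H$ is a map $f:V(G)\to V(H)$ with $f(u)f(v)\in E(H)$ whenever $uv\in E(G)$. For a graph $G$ with vertex set $V_0=\{\langle 0,j\rangle : 0\le j\le n-1\}$ and edge set $E_0$, and $m>0$, the generalized Mycielskian ${\sf M}_m(G)$ has vertex set $V_0\cup V_1\cup\cdots\cup V_m\cup\{u\}$ where $V_i=\{\langle i,j\rangle: 0\le j\le n-1\}$, and edge set $E_0\cup E_1\cup\cdots\cup E_m\cup\{\langle m,j\rangle u: 0\le j\le n-1\}$, where $E_i=\{\langle i-1,j\rangle\langle i,k\rangle : \langle 0,j\rangle\langle 0,k\rangle\in E_0\}$ for $1\le i\le m$. *)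

(* Defs.v *)
From mathcomp Require Import all_boot.
Set Implicit Arguments. Unset Strict Implicit. Unset Printing Implicit Defensive.

Definition cycle_adj (n : nat) : rel 'I_n :=
  fun j k => (val k == (val j).+1 %% n) || (val j == (val k).+1 %% n).

(* Vertex type of the generalized Mycielskian M_m(G) for G on 'I_n:
   Some (i, j) is <i,j> with 0 <= i <= m, None is the apex u. *)
Definition myc_vertex (m n : nat) := option ('I_m.+1 * 'I_n)%type.

Definition myc_adj (n : nat) (adj : rel 'I_n) (m : nat) : rel (myc_vertex m n) :=
  fun x y =>
    match x, y with
    | Some (i, j), Some (i', k) =>
        adj j k && [|| (val i == 0) && (val i' == 0),
                       (val i).+1 == val i' | (val i').+1 == val i]
    | Some (i, _), None => val i == m
    | None, Some (i, _) => val i == m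
    | None, None => false
    end.

Definition graph_hom (T1 T2 : Type) (e1 : rel T1) (e2 : rel T2) (f : T1 -> T2) :=
  forall x y, e1 x y -> e2 (f x) (f y).

(* Main.v *)
Require Import Defs.
From mathcomp Require Import all_boot.
From mathcomp Require Import zify.

Definition gn (s j : nat) : nat :=
  if j <= 2 * s then j else if j %% 2 == 1 then (2 * s).-1 else 2 * s.

Lemma modS_eq (a n : nat) : a < n -> a.+1 %% n = if a.+1 == n then 0 else a.+1.
Proof.
move=> H; case: eqP => [->|ne]; first by rewrite modnn.
by rewrite modn_small //; lia.
Qed.

Lemma adj_iff (n a b : nat) : a < n -> b < n ->
  ((b == a.+1 %% n) || (a == b.+1 %% n)) <->
  (b = a.+1 \/ a = b.+1 \/ (a.+1 = n /\ b = 0) \/ (b.+1 = n /\ a = 0)).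
Proof.
move=> Ha Hb; rewrite (modS_eq _ _ Ha) (modS_eq _ _ Hb).
split.
- case/orP; case: ifP => /eqP ? /eqP ?; lia.
- move=> H; do 2 case: ifP => /eqP ?; apply/orP; lia.
Qed.

Lemma gn_hom (q s a b : nat) : 1 <= s -> s <= q -> a < (2*q).+1 -> b < (2*q).+1 ->
  (b == a.+1 %% (2*q).+1) || (a == b.+1 %% (2*q).+1) ->
  (gn s b == (gn s a).+1 %% (2*s).+1) || (gn s a == (gn s b).+1 %% (2*s).+1).
Proof.
move=> Hs Hsq Ha Hb.
have Ga : gn s a < (2*s).+1 by rewrite /gn; repeat case: ifP; lia.
have Gb : gn s b < (2*s).+1 by rewrite /gn; repeat case: ifP; lia.
move/(adj_iff _ _ _ Ha Hb) => H; apply/(adj_iff _ _ _ Ga Gb).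
have Sa : (a <= 2*s /\ gn s a = a) \/ (2*s < a /\ a %% 2 = 1 /\ gn s a = (2*s).-1) \/ (2*s < a /\ a %% 2 = 0 /\ gn s a = 2*s).
  rewrite /gn; repeat case: ifP; move=> *; try lia.
have Sb : (b <= 2*s /\ gn s b = b) \/ (2*s < b /\ b %% 2 = 1 /\ gn s b = (2*s).-1) \/ (2*s < b /\ b %% 2 = 0 /\ gn s b = 2*s).
  rewrite /gn; repeat case: ifP; move=> *; try lia.
move: Ga Gb Sa Sb; set x := gn s a; set y := gn s b => Ga Gb Sa Sb.
case: Sa => [[? ->]|[[? [? ->]]|[? [? ->]]]];
case: Sb => [[? ->]|[[? [? ->]]|[? [? ->]]]]; lia.
Qed.

Lemma lev_ok a b d : [|| (a==0)&&(b==0), a.+1==b | b.+1==a] ->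
  [|| (a-d==0)&&(b-d==0), (a-d).+1==b-d | (b-d).+1==a-d].
Proof. move=> H. lia. Qed.

Theorem lemma11 (p m q s : nat) :
  1 <= m -> m <= p -> 1 <= s -> s <= q ->
  exists f : myc_vertex p (2 * q).+1 -> myc_vertex m (2 * s).+1,
    graph_hom (@myc_adj (2 * q).+1 (@cycle_adj (2 * q).+1) p)
              (@myc_adj (2 * s).+1 (@cycle_adj (2 * s).+1) m) f.
Proof.
move=> Hm Hmp Hs Hsq.
pose f (x : myc_vertex p (2 * q).+1) : myc_vertex m (2 * s).+1 :=
  match x with
  | None => None
  | Some (i, j) => Some (inord (val i - (p - m)), inord (gn s (val j)))
  end.
exists f => [[[i j]|] [[i' k]|]] //=.
- have Hi := ltn_ord i; have Hi' := ltn_ord i'.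
  have Hj := ltn_ord j; have Hk := ltn_ord k.
  have Gj : gn s j < (2*s).+1 by rewrite /gn; repeat case: ifP; lia.
  have Gk : gn s k < (2*s).+1 by rewrite /gn; repeat case: ifP; lia.
  have L1 : i - (p - m) < m.+1 by lia.
  have L2 : i' - (p - m) < m.+1 by lia.
  have E1 : \val (inord (gn s j) : 'I_(2*s).+1) = gn s j := inordK Gj.
  have E2 : \val (inord (gn s k) : 'I_(2*s).+1) = gn s k := inordK Gk.
  rewrite /cycle_adj (inordK L1) (inordK L2) E1 E2.
  move=> /andP [Hadj Hlev]; apply/andP; split; first exact: (gn_hom _ _ _ _ Hs Hsq Hj Hk Hadj).
  exact: lev_ok.
- move=> /eqP H; rewrite inordK; lia.
- move=> /eqP H; rewrite inordK; lia.
Qed.
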